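(* Let $n\ge2$ and let $B_1,\dots,B_n$ be points in the plane with $B_i\ne B_{i+1}$ for all $i$ (indices mod $n$). Let $\varphi_i$ be the direction of the side $B_iB_{i+1}$ and $\theta_i=\varphi_i-\varphi_{i-1}$ the exterior angle at $B_i$. If $n$ is odd, the polygon has a unique framing. If $n$ is even, the polygon admits a framing if and only if $$\sum_{i\ \mathrm{odd}}\theta_i\equiv\sum_{i\ \mathrm{even}}\theta_i\equiv 0 \pmod{\pi},$$ in which case there is a one-parameter family of framings.
   Context: For nonzero plane vectors $u,v$, $\angle(u,v)\in\mathbb{R}/2\pi\mathbb{Z}$ is the angle through which $u$ must be rotated counterclockwise to align with $v$. A framing of the polygon $B_1,\dots,B_n$ is an assignment of unit vectors $u_1,\dots,u_n$ to its vertices such that $\angle(u_i,B_{i+1}-B_i)=\angle(B_{i+1}-B_i,u_{i+1})$ for all $i$ (indices mod $n$). Framings $(u_i)$ and $(-u_i)$ are identified (so uniqueness is up to this involution). *)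

(* Defs.v *)
From Stdlib Require Import Reals List Lra.
Open Scope R_scope.

Definition vec := (R * R)%type.

Definition vsub (a b : vec) : vec := (fst a - fst b, snd a - snd b).
Definition vopp (a : vec) : vec := (- fst a, - snd a).
Definition vscale (r : R) (a : vec) : vec := (r * fst a, r * snd a).
Definition is_unit (u : vec) : Prop := fst u * fst u + snd u * snd u = 1.

Definition rot (t : R) (a : vec) : vec :=
  (cos t * fst a - sin t * snd a, sin t * fst a + cos t * snd a).

Definition same_dir (a b : vec) : Prop := exists r, 0 < r /\ b = vscale r a.

(* angle(u,v) = t (mod 2pi): rotating u counterclockwise by t aligns it with v *)
Definition angle_is (u v : vec) (t : R) : Prop := same_dir (rot t u) v.

(* angle(u,v) = angle(u',v') in R/2piZ *)
Definition angle_eq (u v u' v' : vec) : Prop :=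
  exists t, angle_is u v t /\ angle_is u' v' t.

(* 0-based indices 0..n-1, taken mod n *)
Definition nxt (n i : nat) : nat := ((i + 1) mod n)%nat.
Definition prv (n i : nat) : nat := ((i + n - 1) mod n)%nat.

Definition side (n : nat) (B : nat -> vec) (i : nat) : vec := vsub (B (nxt n i)) (B i).

Definition framing (n : nat) (B : nat -> vec) (u : nat -> vec) : Prop :=
  (forall i, (i < n)%nat -> is_unit (u i)) /\
  (forall i, (i < n)%nat ->
     angle_eq (u i) (side n B i) (side n B i) (u (nxt n i))).

(* framings are identified up to u |-> -u *)
Definition same_framing (n : nat) (u v : nat -> vec) : Prop :=
  (forall i, (i < n)%nat -> v i = u i) \/ (forall i, (i < n)%nat -> v i = vopp (u i)).

Definition is_direction (phi : R) (e : vec) : Prop := same_dir (cos phi, sin phi) e.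

Definition ext_angle (n : nat) (phi : nat -> R) (i : nat) : R := phi i - phi (prv n i).

Definition sum_sel (n : nat) (P : nat -> bool) (f : nat -> R) : R :=
  fold_right Rplus 0 (map f (filter P (seq 0 n))).

Definition cong_pi (x : R) : Prop := exists k : Z, x = IZR k * PI.

(* Main.v *)
Require Import Defs.
From Stdlib Require Import Reals Arith Lra Lia Psatz List.
Open Scope R_scope.

Lemma polar (c s : R) : c*c + s*s = 1 -> exists t, cos t = c /\ sin t = s.
Proof.
  intros H.
  assert (Hb : -1 <= c <= 1) by nra.
  assert (Hs : sin (acos c) = Rabs s).
  { rewrite sin_acos by exact Hb. rewrite <- sqrt_Rsqr_abs. f_equal. unfold Rsqr. lra. }
  destruct (Rle_dec 0 s) as [Hp|Hn].
  - exists (acos c). split. apply cos_acos; exact Hb. rewrite Hs. apply Rabs_right; lra.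
  - exists (- acos c). rewrite cos_neg, sin_neg. split. apply cos_acos; exact Hb.
    rewrite Hs. rewrite Rabs_left; lra.
Qed.

Definition refl (c s : R) (u : vec) : vec :=
  (fst u * (c*c - s*s) + 2*c*s*snd u, 2*c*s*fst u - (c*c - s*s)*snd u).

Lemma cs1 t : cos t * cos t + sin t * sin t = 1.
Proof. pose proof (sin2_cos2 t). unfold Rsqr in H. lra. Qed.

Lemma step (u v : vec) (c sn r : R) : is_unit u -> is_unit v -> c*c+sn*sn = 1 -> 0<r ->
  (angle_eq u (vscale r (c,sn)) (vscale r (c,sn)) v <-> v = refl c sn u).
Proof.
  destruct u as [ux uy], v as [vx vy]. unfold is_unit, angle_eq, angle_is, same_dir, refl, rot, vscale; simpl.
  intros Hu Hv Hc Hr. split.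
  - intros [t [[r1 [Hr1 E1]] [r2 [Hr2 E2]]]].
    injection E1 as E1a E1b. injection E2 as E2a E2b.
    pose proof (cs1 t) as Ht.
    set (wx := cos t * ux - sin t * uy) in *.
    set (wy := sin t * ux + cos t * uy) in *.
    assert (Hw : wx*wx + wy*wy = 1) by (unfold wx, wy; nra).
    assert (Hrr : r*r = r1*r1).
    { replace (r*r) with ((r*c)*(r*c) + (r*sn)*(r*sn)) by nra. rewrite E1a, E1b. nra. }
    assert (Hr1e : r = r1) by nra. subst r1.
    assert (Hcx : c = wx) by (apply Rmult_eq_reg_l with r; [assumption | lra]).
    assert (Hsy : sn = wy) by (apply Rmult_eq_reg_l with r; [assumption | lra]).
    assert (Hct : cos t = ux*c + uy*sn) by (rewrite Hcx, Hsy; unfold wx, wy; transitivity (cos t*(ux*ux+uy*uy)); [rewrite Hu; ring | ring]).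
    assert (Hst : sin t = ux*sn - uy*c) by (rewrite Hcx, Hsy; unfold wx, wy; transitivity (sin t*(ux*ux+uy*uy)); [rewrite Hu; ring | ring]).
    assert (Hrr2 : (r2*r)*(r2*r) = 1).
    { rewrite <- Hv. rewrite E2a, E2b. transitivity ((r2*r)*(r2*r)*(c*c+sn*sn)*(cos t * cos t + sin t * sin t)). rewrite Hc, Ht; ring. ring. }
    assert (Hpos : 0 < r2*r) by (apply Rmult_lt_0_compat; lra).
    assert (Hrr2' : r2 * r = 1). { set (x := r2*r) in *. nra. }
    f_equal.
    + rewrite E2a. transitivity ((r2*r) * (cos t * c - sin t * sn)). ring.
      rewrite Hrr2', Hct, Hst. nra.
    + rewrite E2b. transitivity ((r2*r) * (sin t * c + cos t * sn)). ring.
      rewrite Hrr2', Hct, Hst. nra.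
  - intros E. injection E as Ea Eb.
    destruct (polar (ux*c + uy*sn) (ux*sn - uy*c)) as [t [Hct Hst]]. nra.
    exists t. split.
    + exists r. split. exact Hr. rewrite Hct, Hst. f_equal.
      * transitivity (r*c*(ux*ux+uy*uy)). rewrite Hu; ring. ring.
      * transitivity (r*sn*(ux*ux+uy*uy)). rewrite Hu; ring. ring.
    + exists (/r). split. apply Rinv_0_lt_compat; exact Hr.
      rewrite Hct, Hst, Ea, Eb. f_equal; field; lra.
Qed.

Fixpoint U (phi : nat -> R) (w : vec) (k : nat) : vec :=
  match k with O => w | S k => refl (cos (phi k)) (sin (phi k)) (U phi w k) end.
Fixpoint alpha (phi : nat -> R) (b : R) (k : nat) : R :=
  match k with O => b | S k => 2 * phi k - alpha phi b k end.
Fixpoint A (phi : nat -> R) (k : nat) : R :=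
  match k with O => 0 | S k => A phi k + (if Nat.even k then phi k else - phi k) end.

Lemma refl_unit c s u : c*c+s*s = 1 -> is_unit u -> is_unit (refl c s u).
Proof.
  destruct u as [x y]; unfold is_unit, refl; simpl; intros Hc Hu.
  transitivity ((c*c+s*s)*(c*c+s*s)*(x*x+y*y)). ring. rewrite Hc, Hu; ring.
Qed.

Lemma refl_opp c s u : refl c s (vopp u) = vopp (refl c s u).
Proof. destruct u; unfold refl, vopp; simpl; f_equal; ring. Qed.

Lemma refl_pol f a : refl (cos f) (sin f) (cos a, sin a) = (cos (2*f - a), sin (2*f - a)).
Proof.
  unfold refl; simpl. rewrite cos_minus, sin_minus, cos_2a, sin_2a. f_equal; ring.
Qed.

Lemma alpha_closed phi b k :
  alpha phi b k = if Nat.even k then b - 2 * A phi k else 2 * A phi k - b.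
Proof.
  induction k as [|k IH]; cbn [alpha A]. simpl; lra.
  rewrite IH, Nat.even_succ, <- Nat.negb_even.
  destruct (Nat.even k); simpl; lra.
Qed.

Lemma U_pol phi b k : U phi (cos b, sin b) k = (cos (alpha phi b k), sin (alpha phi b k)).
Proof. induction k as [|k IH]; simpl. reflexivity. rewrite IH, refl_pol. reflexivity. Qed.

Lemma U_opp phi w k : U phi (vopp w) k = vopp (U phi w k).
Proof. induction k as [|k IH]; simpl. reflexivity. rewrite IH, refl_opp. reflexivity. Qed.

Lemma U_unit phi w k : is_unit w -> is_unit (U phi w k).
Proof. intro H; induction k; simpl. exact H. apply refl_unit. apply cs1. exact IHk. Qed.

Lemma nxt_lt n i : (i + 1 < n)%nat -> nxt n i = (i + 1)%nat.
Proof. intro H; unfold nxt; apply Nat.mod_small; exact H. Qed.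

Lemma nxt_last n : (1 <= n)%nat -> nxt n (n - 1) = 0%nat.
Proof. intro H; unfold nxt. replace (n - 1 + 1)%nat with n by lia. apply Nat.mod_same; lia. Qed.

Section Fr.
Variables (n : nat) (B : nat -> vec) (phi : nat -> R).
Hypothesis Hn : (2 <= n)%nat.
Hypothesis Hdir : forall i, (i < n)%nat -> is_direction (phi i) (side n B i).

Lemma step_i i u v : (i < n)%nat -> is_unit u -> is_unit v ->
  (angle_eq u (side n B i) (side n B i) v <-> v = refl (cos (phi i)) (sin (phi i)) u).
Proof.
  intros Hi Hu Hv. destruct (Hdir i Hi) as [r [Hr E]]. rewrite E.
  apply step; auto. apply cs1.
Qed.

Lemma framing_elim v : framing n B v ->
  (forall k, (k < n)%nat -> v k = U phi (v 0%nat) k) /\ U phi (v 0%nat) n = v 0%nat.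
Proof.
  intros [Hu Ha].
  assert (Hk : forall k, (k < n)%nat -> v k = U phi (v 0%nat) k).
  { induction k as [|k IH]; intro Hk. reflexivity.
    simpl. rewrite <- IH by lia.
    assert (Hs := Ha k ltac:(lia)). rewrite nxt_lt in Hs by lia.
    apply (step_i k (v k) (v (k+1)%nat)) in Hs; try (apply Hu; lia); try lia.
    rewrite Nat.add_1_r in Hs. exact Hs. }
  split. exact Hk.
  assert (Hs := Ha (n-1)%nat ltac:(lia)). rewrite nxt_last in Hs by lia.
  apply (step_i (n-1) (v (n-1)%nat) (v 0%nat)) in Hs; try (apply Hu; lia); try lia.
  replace n with (S (n-1)) at 1 by lia. simpl. rewrite <- Hk by lia. symmetry. exact Hs.
Qed.

Lemma framing_intro w : is_unit w -> U phi w n = w -> framing n B (U phi w).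
Proof.
  intros Hw Hc. split.
  - intros i _. apply U_unit; exact Hw.
  - intros i Hi. apply step_i; try exact Hi; try apply U_unit; try exact Hw.
    destruct (Nat.lt_ge_cases (i+1) n) as [Hl|Hl].
    + rewrite nxt_lt by exact Hl. rewrite Nat.add_1_r. reflexivity.
    + assert (i = n - 1)%nat by lia. subst i. rewrite nxt_last by lia.
      simpl. rewrite <- Hc at 1. replace n with (S (n-1)) at 1 by lia. reflexivity.
Qed.
End Fr.

Fixpoint Ssum (P : nat -> bool) (f : nat -> R) (k : nat) : R :=
  match k with O => 0 | S k => Ssum P f k + (if P k then f k else 0) end.

Lemma fold_plus a l : fold_right Rplus a l = a + fold_right Rplus 0 l.
Proof. induction l; simpl. lra. rewrite IHl. lra. Qed.

Lemma sum_sel_Ssum n P f : sum_sel n P f = Ssum P f n.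
Proof.
  unfold sum_sel. induction n as [|k IH]. reflexivity.
  rewrite seq_S, filter_app, map_app, fold_right_app. simpl Ssum.
  rewrite fold_plus, IH. simpl. destruct (P k); simpl; lra.
Qed.

Lemma Ssum_first P f g k : (1 <= k)%nat -> (forall i, (1 <= i < k)%nat -> f i = g i) ->
  Ssum P f k = Ssum P g k + (if P 0%nat then f 0%nat - g 0%nat else 0).
Proof.
  induction k as [|k IH]; intros Hk H. lia.
  destruct k as [|k].
  - simpl. destruct (P 0%nat); lra.
  - cbn [Ssum] in *. rewrite IH by (try lia; intros; apply H; lia).
    rewrite (H (S k)) by lia. destruct (P 0%nat), (P (S k)); lra.
Qed.

Definition dd (phi : nat -> R) (i : nat) : R := phi i - phi (pred i).

Lemma tele phi k : Ssum Nat.even (dd phi) k + Ssum Nat.odd (dd phi) k = phi (pred k) - phi 0%nat.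
Proof.
  induction k as [|k IH]. simpl. lra.
  cbn [Ssum]. rewrite <- Nat.negb_even. unfold dd in *. simpl pred.
  destruct (Nat.even k); simpl; lra.
Qed.

Lemma even_mm m : Nat.even (m + m) = true.
Proof. induction m. reflexivity. rewrite Nat.add_succ_r. simpl. exact IHm. Qed.

Lemma odd_A phi m : Ssum Nat.odd (dd phi) (m + m) = - A phi (m + m).
Proof.
  induction m as [|m IH]. simpl. lra.
  replace (S m + S m)%nat with (S (S (m+m))) by lia. cbn [Ssum A]. rewrite IH.
  rewrite <- !Nat.negb_even. rewrite Nat.even_succ, <- Nat.negb_even, even_mm.
  unfold dd. simpl. lra.
Qed.

Lemma ext_mid n phi i : (1 <= i < n)%nat -> ext_angle n phi i = dd phi i.
Proof.
  intros H. unfold ext_angle, dd, prv. f_equal. f_equal.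
  symmetry. apply (Nat.mod_unique _ _ 1 (pred i)); lia.
Qed.

Lemma ext_0 n phi : (1 <= n)%nat -> ext_angle n phi 0%nat = phi 0%nat - phi (pred n).
Proof.
  intros H. unfold ext_angle, prv. f_equal. f_equal. rewrite Nat.mod_small; lia.
Qed.

Lemma sums_even n phi : (2 <= n)%nat -> Nat.even n = true ->
  sum_sel n Nat.even (ext_angle n phi) = A phi n /\
  sum_sel n Nat.odd (ext_angle n phi) = - A phi n.
Proof.
  intros Hn He. rewrite !sum_sel_Ssum.
  apply Nat.even_spec in He. destruct He as [m Hm].
  replace (2*m)%nat with (m+m)%nat in Hm by lia. subst n.
  rewrite !(Ssum_first _ (ext_angle (m+m) phi) (dd phi)) by (try lia; intros; apply ext_mid; lia).
  rewrite ext_0 by lia. simpl (Nat.even 0). simpl (Nat.odd 0).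
  pose proof (tele phi (m+m)). pose proof (odd_A phi m).
  change (Nat.odd 0) with false. cbv iota. assert (dd phi 0 = 0) by (unfold dd; simpl; lra). split; lra.
Qed.

Lemma pol_unit b : is_unit (cos b, sin b).
Proof. unfold is_unit; simpl; apply cs1. Qed.

Lemma close_even A0 b : sin A0 = 0 -> (cos (b - 2*A0), sin (b - 2*A0)) = (cos b, sin b).
Proof.
  intro H. rewrite cos_minus, sin_minus, cos_2a_sin, sin_2a, H. f_equal; ring.
Qed.

Lemma close_even_inv A0 b : (cos (b - 2*A0), sin (b - 2*A0)) = (cos b, sin b) -> sin A0 = 0.
Proof.
  intro E. injection E as E1 E2.
  rewrite cos_minus, cos_2a, sin_2a in E1. rewrite sin_minus, cos_2a, sin_2a in E2.
  pose proof (cs1 b) as Hb. pose proof (cs1 A0) as Ha.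
  set (c := cos b) in *. set (s := sin b) in *. set (x := cos A0) in *. set (y := sin A0) in *.
  assert (Hcos : x*x - y*y = 1).
  { transitivity (c*(c*(x*x-y*y)+s*(2*y*x)) + s*(s*(x*x-y*y) - c*(2*y*x))). 
    transitivity ((c*c+s*s)*(x*x-y*y)). rewrite Hb; ring. ring.
    rewrite E1, E2. lra. }
  nra.
Qed.

Lemma cong_sin x : cong_pi x <-> sin x = 0.
Proof. split. intro H; apply sin_eq_0_1; exact H. intro H; apply sin_eq_0_0; exact H. Qed.

Lemma cong_opp x : cong_pi (- x) <-> cong_pi x.
Proof.
  split; intros [k Hk]; exists (- k)%Z; rewrite opp_IZR; lra.
Qed.

Lemma close_odd A0 b : (cos (2*A0 - b), sin (2*A0 - b)) = (cos b, sin b) ->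
  (cos b, sin b) = (cos A0, sin A0) \/ (cos b, sin b) = vopp (cos A0, sin A0).
Proof.
  intro E. injection E as E1 E2.
  assert (Eb : b = A0 + (b - A0)) by ring.
  set (d := b - A0) in *. clearbody d.
  replace (2*A0 - b) with (A0 - d) in E1, E2 by lra.
  rewrite Eb in E1, E2 |- *.
  rewrite cos_minus, cos_plus in E1. rewrite sin_minus, sin_plus in E2.
  rewrite cos_plus, sin_plus. unfold vopp; simpl.
  pose proof (cs1 d) as Hd. pose proof (cs1 A0) as Ha.
  set (c := cos d) in *. set (s := sin d) in *. set (x := cos A0) in *. set (y := sin A0) in *.
  assert (H1 : y * s = 0) by lra. assert (H2 : x * s = 0) by lra.
  assert (Hs : s = 0).
  { transitivity (s*(x*x+y*y)). rewrite Ha; ring. transitivity (x*(x*s) + y*(y*s)). ring.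
    rewrite H1, H2; ring. }
  rewrite Hs in Hd |- *.
  assert (Hc : (c - 1) * (c + 1) = 0) by lra.
  apply Rmult_integral in Hc. destruct Hc as [Hc|Hc].
  - left. replace c with 1 by lra. f_equal; ring.
  - right. replace c with (-1) by lra. f_equal; ring.
Qed.

Theorem lemma2p2 (n : nat) (B : nat -> vec) (phi : nat -> R) :
  (2 <= n)%nat ->
  (forall i, (i < n)%nat -> B i <> B (nxt n i)) ->
  (forall i, (i < n)%nat -> is_direction (phi i) (side n B i)) ->
  (Nat.odd n = true ->
     exists u, framing n B u /\
       forall v, framing n B v -> same_framing n u v) /\
  (Nat.even n = true ->
     ((exists u, framing n B u) <->
        (cong_pi (sum_sel n Nat.even (ext_angle n phi)) /\
         cong_pi (sum_sel n Nat.odd (ext_angle n phi)))) /\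
     ((exists u, framing n B u) ->
        forall w : vec, is_unit w ->
          exists u, framing n B u /\ u 0%nat = w /\
            forall v, framing n B v -> v 0%nat = w ->
              forall i, (i < n)%nat -> v i = u i)).
Proof.
  intros Hn _ Hdir. split.
  - intro Hodd. rewrite <- Nat.negb_even in Hodd.
    assert (Hev : Nat.even n = false) by (destruct (Nat.even n); simpl in *; congruence).
    set (An := A phi n).
    exists (U phi (cos An, sin An)). split.
    + apply framing_intro; auto. apply pol_unit.
      rewrite U_pol, alpha_closed, Hev. fold An. f_equal; f_equal; ring.
    + intros v Hv. destruct (framing_elim n B phi Hn Hdir v Hv) as [Hk Hc].
      destruct (polar (fst (v 0%nat)) (snd (v 0%nat))) as [b [Hb1 Hb2]].
      { apply (proj1 Hv); lia. }
      assert (E0 : v 0%nat = (cos b, sin b)) by (rewrite Hb1, Hb2; destruct (v 0%nat); reflexivity).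
      rewrite E0, U_pol, alpha_closed, Hev in Hc. fold An in Hc.
      destruct (close_odd An b Hc) as [H|H]; unfold same_framing.
      * left. intros i Hi. rewrite Hk by exact Hi. rewrite E0, H. reflexivity.
      * right. intros i Hi. rewrite Hk by exact Hi. rewrite E0, H, U_opp. reflexivity.
  - intro Hev. destruct (sums_even n phi Hn Hev) as [Se So]. rewrite Se, So.
    assert (Key : (exists u, framing n B u) -> sin (A phi n) = 0).
    { intros [v Hv]. destruct (framing_elim n B phi Hn Hdir v Hv) as [Hk Hc].
      destruct (polar (fst (v 0%nat)) (snd (v 0%nat))) as [b [Hb1 Hb2]].
      { apply (proj1 Hv); lia. }
      assert (E0 : v 0%nat = (cos b, sin b)) by (rewrite Hb1, Hb2; destruct (v 0%nat); reflexivity).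
      rewrite E0, U_pol, alpha_closed, Hev in Hc.
      exact (close_even_inv _ _ Hc). }
    assert (Ex : sin (A phi n) = 0 -> forall w, is_unit w ->
       exists u, framing n B u /\ u 0%nat = w /\
            forall v, framing n B v -> v 0%nat = w ->
              forall i, (i < n)%nat -> v i = u i).
    { intros Hs w Hw. exists (U phi w).
      destruct (polar (fst w) (snd w)) as [b [Hb1 Hb2]]. exact Hw.
      assert (E0 : w = (cos b, sin b)) by (rewrite Hb1, Hb2; destruct w; reflexivity).
      split; [|split].
      - apply framing_intro; auto. rewrite E0, U_pol, alpha_closed, Hev.
        apply close_even; exact Hs.
      - reflexivity.
      - intros v Hv Hv0 i Hi. destruct (framing_elim n B phi Hn Hdir v Hv) as [Hk _].
        rewrite Hk by exact Hi. rewrite Hv0. reflexivity. }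
    split.
    + split.
      * intro H. apply Key in H. split. apply cong_sin; exact H. apply cong_opp, cong_sin; exact H.
      * intros [H _]. apply cong_sin in H.
        destruct (Ex H (cos 0, sin 0) (pol_unit 0)) as [u [Hu _]]. exists u; exact Hu.
    + intros H. apply Ex. apply Key; exact H.
Qed.
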